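(* Assume the setup below, with the training loss nonincreasing along the trajectory, and let $t_0$ be a time. Suppose that for every time $t\ge t_0$ the set $\{\delta X(s,\alpha(t)):s\in T\}$ satisfies Condition A at time $t$ with constants $\Lambda\ge 1$, $\psi=1$, $0<\phi<1$ and $m_0=0$. Then for every $\varepsilon>0$ there exist $\delta>0$ and $\eta>0$ (depending only on $\Lambda,\phi,K,\varepsilon$) such that, whenever $$\nu(G_\eta(t_0))>1-\delta\quad\text{and}\quad B_{-1}(t_0)=\emptyset,$$ then for all $t\ge t_0$: $$\mathrm{acc}(t)=\nu(G_0(t))\ge 1-\varepsilon,$$ and for every $\eta^*$ with $0<\eta^*<-\log\big(3\Lambda \bar L(t_0)\big)$, $$\nu(G_{\eta^*}(t))>1-\varepsilon-\left(\tfrac34\right)^{-\frac{\log(3\Lambda \bar L(t_0))}{2\eta^*}}.$$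
   Context: Setup. Fix integers $n\ge1$, $K\ge 2$. $T\subset\mathbb R^n$ is a finite set (training set); each $s\in T$ has a class $i(s)\in\{1,\dots,K\}$ and a weight $\nu(s)\in(0,1]$ with $\sum_{s\in T}\nu(s)=1$; for $A\subset T$, $\nu(A)=\sum_{s\in A}\nu(s)$. A parametrized family of maps $X(\cdot,\alpha):\mathbb R^n\to\mathbb R^K$ is given, and the classifier is $p(s,\alpha)=\rho(X(s,\alpha))$ where $\rho$ is the softmax, $p_k(s,\alpha)=e^{X_k(s,\alpha)}/\sum_{j=1}^K e^{X_j(s,\alpha)}$. Define $\delta X(s,\alpha)=X_{i(s)}(s,\alpha)-\max_{j\ne i(s)}X_j(s,\alpha)$ and the cross-entropy loss $\bar L(\alpha)=-\sum_{s\in T}\nu(s)\log p_{i(s)}(s,\alpha)$. A training trajectory is a family of parameters $\alpha(t)$ indexed by times $t$ (e.g. nonnegative integers); write $\bar L(t)=\bar L(\alpha(t))$; ''loss nonincreasing'' means $\bar L(t_2)\le \bar L(t_1)$ whenever $t_2\ge t_1$. Good set of margin $\eta$: $G_\eta(t)=\{s\in T:\delta X(s,\alpha(t))>\eta\}$; bad set: $B_{-\eta}(t)=\{s\in T:\delta X(s,\alpha(t))\le-\eta\}$; accuracy $\mathrm{acc}(t)=\nu(G_0(t))$. Condition A at time $t$ with constants $\Lambda\ge1$, $m_0\ge 0$, $\psi>0$, $0<\phi<1$: letting $\beta(t)=\min_{s\in T}\delta X(s,\alpha(t))$, for $x_1\in\{0,\beta(t)\}$ and every $x_2>x_1$, $$\nu(\{s:\delta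 X(s,\alpha(t))<\tfrac{x_1+x_2}{2}\})-m_0\le \Lambda\,\nu(\{s:\delta X(s,\alpha(t))<x_1\})^{\phi}+\Lambda\,\nu(\{s:\delta X(s,\alpha(t))<x_2\})^{\psi+1}$$ (with the convention $0^\phi=0$). *)

(* Defs.v *)
From Stdlib Require Import Reals List Arith.
From Stdlib Require Fin.
Import ListNotations.
Open Scope R_scope.

Fixpoint sumR (m : nat) (f : nat -> R) : R :=
  match m with
  | O => 0
  | S k => sumR k f + f k
  end.

(* Maximum / minimum of a (nonempty) list of reals; 0 for the empty list. *)
Definition Rmax_list (l : list R) : R :=
  match l with nil => 0 | x :: r => fold_right Rmax x r end.
Definition Rmin_list (l : list R) : R :=
  match l with nil => 0 | x :: r => fold_right Rmin x r end.

Definition Rltb (x y : R) : bool := if Rlt_dec x y then true else false.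

(* Power with the convention 0^a = 0 (for a nonnegative base). *)
Definition rpow0 (x a : R) : R := if Rlt_dec 0 x then Rpower x a else 0.

(* Classes are 0-based: {0,...,K-1}.  Xs : component index -> value. *)
Definition deltaX (K : nat) (Xs : nat -> R) (c : nat) : R :=
  Xs c - Rmax_list (map Xs (filter (fun j => negb (Nat.eqb j c)) (seq 0 K))).

Definition softmax (K : nat) (Xs : nat -> R) (k : nat) : R :=
  exp (Xs k) / sumR K (fun j => exp (Xs j)).

(* Training set indexed by i < m: point pt i, class cls i, weight nu i. *)
Definition nuset (m : nat) (nu : nat -> R) (b : nat -> bool) : R :=
  sumR m (fun i => if b i then nu i else 0).

Definition dXt {n : nat} {P : Type} (K : nat) (X : P -> (Fin.t n -> R) -> nat -> R)
  (pt : nat -> (Fin.t n -> R)) (cls : nat -> nat) (alpha : nat -> P)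
  (t : nat) (i : nat) : R :=
  deltaX K (X (alpha t) (pt i)) (cls i).

Definition Lbar {n : nat} {P : Type} (K m : nat) (X : P -> (Fin.t n -> R) -> nat -> R)
  (pt : nat -> (Fin.t n -> R)) (cls : nat -> nat) (nu : nat -> R) (alpha : nat -> P)
  (t : nat) : R :=
  - sumR m (fun i => nu i * ln (softmax K (X (alpha t) (pt i)) (cls i))).

Definition condA (m : nat) (nu : nat -> R) (d : nat -> R)
  (Lam m0 psi phi : R) : Prop :=
  let beta := Rmin_list (map d (seq 0 m)) in
  forall x1 : R, (x1 = 0 \/ x1 = beta) ->
  forall x2 : R, x1 < x2 ->
    nuset m nu (fun i => Rltb (d i) ((x1 + x2) / 2)) - m0 <=
      Lam * rpow0 (nuset m nu (fun i => Rltb (d i) x1)) phi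
      + Lam * rpow0 (nuset m nu (fun i => Rltb (d i) x2)) (psi + 1).

(* Main.v *)
Require Import Defs.
From Stdlib Require Import Reals List Arith Lra Lia.
From Stdlib Require Fin.
Import ListNotations.
Open Scope R_scope.

Lemma sumR_ext m f g : (forall i, (i < m)%nat -> f i = g i) -> sumR m f = sumR m g.
Proof. induction m; simpl; intros H; auto. rewrite IHm by (intros; apply H; lia). rewrite H by lia; auto. Qed.

Lemma sumR_le m f g : (forall i, (i < m)%nat -> f i <= g i) -> sumR m f <= sumR m g.
Proof. induction m; simpl; intros H; [lra|]. assert (sumR m f <= sumR m g) by (apply IHm; intros; apply H; lia).
 assert (f m <= g m) by (apply H; lia). lra. Qed.

Lemma sumR_plus m f g : sumR m (fun i => f i + g i) = sumR m f + sumR m g.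
Proof. induction m; simpl; [lra|]. rewrite IHm; lra. Qed.

Lemma sumR_scal m c f : sumR m (fun i => c * f i) = c * sumR m f.
Proof. induction m; simpl; [lra|]. rewrite IHm; lra. Qed.

Lemma sumR_opp m f : sumR m (fun i => - f i) = - sumR m f.
Proof. induction m; simpl; [lra|]. rewrite IHm; lra. Qed.

Lemma sumR_const m a : sumR m (fun _ => a) = INR m * a.
Proof. induction m; simpl sumR; [simpl; lra|]. rewrite IHm, S_INR; lra. Qed.

Lemma sumR_nonneg m f : (forall i, (i < m)%nat -> 0 <= f i) -> 0 <= sumR m f.
Proof. intros H. rewrite <- (Rmult_0_r (INR m)), <- sumR_const. apply sumR_le; auto. Qed.

Lemma sumR_ge_term m f k : (forall i, (i < m)%nat -> 0 <= f i) -> (k < m)%nat -> f k <= sumR m f.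
Proof. induction m; simpl; intros H Hk; [lia|].
 assert (0 <= sumR m f) by (apply sumR_nonneg; intros; apply H; lia).
 destruct (Nat.eq_dec k m). subst; lra.
 assert (f k <= sumR m f) by (apply IHm; [intros; apply H; lia| lia]).
 assert (0 <= f m) by (apply H; lia). lra. Qed.

Lemma sumR_split m f c : (c < m)%nat ->
  sumR m f = f c + sumR m (fun j => if Nat.eqb j c then 0 else f j).
Proof. induction m; intros Hc; [lia|]. simpl.
 destruct (Nat.eq_dec c m).
 - subst. rewrite Nat.eqb_refl.
   rewrite (sumR_ext m (fun j => if (j =? m)%nat then 0 else f j) f); [lra|].
   intros i Hi. destruct (Nat.eqb_spec i m); [lia|auto].
 - rewrite IHm by lia. destruct (Nat.eqb_spec m c); [lia|]. lra. Qed.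

Lemma fold_max_prop a r : a <= fold_right Rmax a r /\ forall x, In x r -> x <= fold_right Rmax a r.
Proof. induction r as [|b r IH]; simpl. split; [lra| tauto].
 destruct IH as [H1 H2]. split.
 - eapply Rle_trans; [apply H1| apply Rmax_r].
 - intros x [<-|Hx]; [apply Rmax_l|]. eapply Rle_trans; [apply H2; auto| apply Rmax_r]. Qed.

Lemma Rmax_list_ge l x : In x l -> x <= Rmax_list l.
Proof. destruct l as [|a r]; simpl; [tauto|]. destruct (fold_max_prop a r) as [H1 H2].
 intros [<-|Hx]; auto. Qed.

Lemma Rmax_list_in l : l <> [] -> In (Rmax_list l) l.
Proof. destruct l as [|a r]; [tauto|]. intros _. simpl.
 induction r as [|b r IH]; simpl; [auto|].
 apply Rmax_case; [auto|]. destruct IH; auto. Qed.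

Lemma exp_le_inv a b : exp a <= exp b -> a <= b.
Proof. intros H. destruct (Rle_or_lt a b); auto. apply exp_increasing in H0. lra. Qed.

Lemma exp_le_mono a b : a <= b -> exp a <= exp b.
Proof. intros H. destruct (Rle_lt_or_eq_dec _ _ H). left; apply exp_increasing; auto. subst; lra. Qed.

Lemma ln_le_mono x y : 0 < x -> x <= y -> ln x <= ln y.
Proof. intros Hx H. destruct (Rle_lt_or_eq_dec _ _ H). left; apply ln_increasing; auto. subst; lra. Qed.

Lemma ln_1p_le y : -1 < y -> ln (1 + y) <= y.
Proof. intros H. apply exp_le_inv. rewrite exp_ln by lra. apply exp_ineq1_le. Qed.

Lemma ln_1p_ge y : 0 <= y -> y / (1 + y) <= ln (1 + y).
Proof. intros H.
 assert (Hz : ln (/ (1 + y)) <= / (1 + y) - 1).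
 { assert (0 < / (1+y)) by (apply Rinv_0_lt_compat; lra).
   pose proof (ln_1p_le (/ (1+y) - 1)). replace (1 + (/ (1+y) - 1)) with (/(1+y)) in H1 by ring. apply H1; lra. }
 rewrite ln_Rinv in Hz by lra.
 replace (/ (1 + y) - 1) with (- (y / (1 + y))) in Hz by (field; lra). lra. Qed.

Lemma ln_1p_ge_half y : 0 <= y <= 1 -> y / 2 <= ln (1 + y).
Proof. intros H. eapply Rle_trans; [|apply ln_1p_ge; lra].
 unfold Rdiv. apply Rmult_le_compat_l; [lra|]. apply Rinv_le_contravar; lra. Qed.

Lemma point_loss K Xs c : (2 <= K)%nat -> (c < K)%nat ->
  ln (1 + exp (- deltaX K Xs c)) <= - ln (softmax K Xs c) /\
  - ln (softmax K Xs c) <= INR K * exp (- deltaX K Xs c).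
Proof. intros HK Hc.
 set (l := map Xs (filter (fun j => negb (Nat.eqb j c)) (seq 0 K))).
 set (M := Rmax_list l).
 assert (Hin : forall j, (j < K)%nat -> j <> c -> In (Xs j) l).
 { intros j Hj Hjc. unfold l. apply in_map. apply filter_In. split.
   apply in_seq; lia. destruct (Nat.eqb_spec j c); [lia|reflexivity]. }
 assert (Hne : l <> []).
 { set (j0 := if Nat.eqb c 0 then 1%nat else 0%nat).
   assert (j0 < K /\ j0 <> c)%nat as [A B] by (unfold j0; destruct (Nat.eqb_spec c 0); lia).
   intros E. pose proof (Hin j0 A B). rewrite E in H. inversion H. }
 assert (HM : exists j, (j < K)%nat /\ j <> c /\ Xs j = M).
 { pose proof (Rmax_list_in l Hne) as H. fold M in H. unfold l in H.
   apply in_map_iff in H. destruct H as [j [E Hj]]. apply filter_In in Hj. destruct Hj as [Hj1 Hj2].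
   apply in_seq in Hj1. exists j. split; [lia|]. split; auto.
   destruct (Nat.eqb_spec j c); [discriminate|auto]. }
 destruct HM as [j1 [Hj1 [Hj1c Ej1]]].
 set (g := fun j => if Nat.eqb j c then 0 else exp (Xs j)).
 set (G := sumR K g).
 assert (HS : sumR K (fun j => exp (Xs j)) = exp (Xs c) + G) by (apply (sumR_split K (fun j => exp (Xs j)) c); auto).
 assert (Hg0 : forall j, (j < K)%nat -> 0 <= g j).
 { intros j _. unfold g. destruct (j =? c)%nat; [lra| left; apply exp_pos]. }
 assert (HGl : exp M <= G).
 { rewrite <- Ej1. replace (exp (Xs j1)) with (g j1). apply sumR_ge_term; auto.
   unfold g. destruct (Nat.eqb_spec j1 c); [lia|auto]. }
 assert (HGu : G <= INR K * exp M).
 { rewrite <- sumR_const. apply sumR_le. intros j Hj. unfold g.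
   destruct (Nat.eqb_spec j c). left; apply exp_pos. apply exp_le_mono. apply Rmax_list_ge. apply Hin; auto. }
 assert (Hd : exp (- deltaX K Xs c) = exp M / exp (Xs c)).
 { unfold deltaX. fold l. fold M. replace (- (Xs c - M)) with (M + - Xs c) by ring.
   rewrite exp_plus, exp_Ropp. reflexivity. }
 assert (HL : - ln (softmax K Xs c) = ln (1 + G / exp (Xs c))).
 { unfold softmax. rewrite HS.
   pose proof (exp_pos (Xs c)). pose proof (exp_pos M).
   replace (exp (Xs c) / (exp (Xs c) + G)) with (/ (1 + G / exp (Xs c))) by (field; lra).
   rewrite ln_Rinv. ring. assert (0 <= G / exp (Xs c)) by (apply Rmult_le_pos; [lra| left; apply Rinv_0_lt_compat; lra]). lra. }
 rewrite HL, Hd. pose proof (exp_pos (Xs c)). pose proof (exp_pos M).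
 assert (A1 : exp M / exp (Xs c) <= G / exp (Xs c)).
 { unfold Rdiv. apply Rmult_le_compat_r; [left; apply Rinv_0_lt_compat|]; lra. }
 assert (A2 : 0 < exp M / exp (Xs c)) by (apply Rdiv_lt_0_compat; lra).
 split.
 - apply ln_le_mono; lra.
 - eapply Rle_trans; [apply ln_1p_le; lra|].
   replace (INR K * (exp M / exp (Xs c))) with ((INR K * exp M) / exp (Xs c)) by (field; lra).
   unfold Rdiv. apply Rmult_le_compat_r; [left; apply Rinv_0_lt_compat|]; lra.
Qed.

Lemma ln_nonpos x : x <= 0 -> ln x = 0.
Proof. intros H. unfold ln. destruct (Rlt_dec 0 x) as [h|h]; [exfalso; lra|reflexivity]. Qed.

Lemma nuset_compl m nu b : sumR m nu = 1 ->
  nuset m nu b + nuset m nu (fun i => negb (b i)) = 1.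
Proof. intros H. unfold nuset. rewrite <- sumR_plus. rewrite <- H. apply sumR_ext.
 intros i _. destruct (b i); simpl; ring. Qed.

Lemma nuset_nonneg m nu b : (forall i, (i < m)%nat -> 0 < nu i <= 1) -> 0 <= nuset m nu b.
Proof. intros H. apply sumR_nonneg. intros i Hi. destruct (b i); [pose proof (H i Hi)|]; lra. Qed.

Theorem theorem1 :
  forall (K : nat) (Lam phi : R),
  (2 <= K)%nat -> 1 <= Lam -> 0 < phi < 1 ->
  forall eps : R, 0 < eps ->
  exists delta eta : R, 0 < delta /\ 0 < eta /\
  forall (n m : nat) (P : Type) (X : P -> (Fin.t n -> R) -> nat -> R)
         (pt : nat -> (Fin.t n -> R)) (cls : nat -> nat) (nu : nat -> R)
         (alpha : nat -> P) (t0 : nat),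
    (forall i j, (i < m)%nat -> (j < m)%nat -> pt i = pt j -> i = j) ->
    (forall i, (i < m)%nat -> (cls i < K)%nat) ->
    (forall i, (i < m)%nat -> 0 < nu i <= 1) ->
    sumR m nu = 1 ->
    (forall t1 t2 : nat, (t1 <= t2)%nat ->
       Lbar K m X pt cls nu alpha t2 <= Lbar K m X pt cls nu alpha t1) ->
    (forall t : nat, (t0 <= t)%nat ->
       condA m nu (dXt K X pt cls alpha t) Lam 0 1 phi) ->
    nuset m nu (fun i => Rltb eta (dXt K X pt cls alpha t0 i)) > 1 - delta ->
    (forall i, (i < m)%nat -> -1 < dXt K X pt cls alpha t0 i) ->
    forall t : nat, (t0 <= t)%nat ->
      nuset m nu (fun i => Rltb 0 (dXt K X pt cls alpha t i)) >= 1 - eps /\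
      forall etas : R,
        0 < etas < - ln (3 * Lam * Lbar K m X pt cls nu alpha t0) ->
        nuset m nu (fun i => Rltb etas (dXt K X pt cls alpha t i)) >
          1 - eps - Rpower (3/4)
                      (- ln (3 * Lam * Lbar K m X pt cls nu alpha t0) / (2 * etas)).
Proof.
  intros K Lam phi HK HLam Hphi eps Heps.
  set (c0 := Rmin (eps/2) (eps*eps/(3*Lam))).
  assert (Hc0 : 0 < c0).
  { unfold c0. apply Rmin_case. lra. apply Rdiv_lt_0_compat; nra. }
  assert (Hc1 : c0 <= eps / 2) by apply Rmin_l.
  assert (Hc2 : c0 * (3 * Lam) <= eps * eps).
  { pose proof (Rmin_r (eps/2) (eps*eps/(3*Lam))). fold c0 in H.
    apply (Rmult_le_compat_r (3*Lam)) in H; [|lra].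
    replace (eps * eps / (3 * Lam) * (3 * Lam)) with (eps*eps) in H by (field; lra). lra. }
  set (Kr := INR K).
  assert (HKr : 2 <= Kr) by (unfold Kr; replace 2 with (INR 2) by (simpl; ring); apply le_INR; auto).
  exists (c0 / (6 * Kr)), (Rmax 1 (ln (2 * Kr / c0))).
  split; [apply Rdiv_lt_0_compat; lra|]. split; [eapply Rlt_le_trans; [|apply Rmax_l]; lra|].
  set (eta := Rmax 1 (ln (2 * Kr / c0))). set (delta := c0 / (6 * Kr)).
  intros n m P X pt cls nu alpha t0 Hinj Hcls Hnu Hsum Hmono HA Hgood Hbad t Ht.
  set (d := fun t i => dXt K X pt cls alpha t i).
  set (ell := fun t i => - ln (softmax K (X (alpha t) (pt i)) (cls i))).
  set (L := fun t => Lbar K m X pt cls nu alpha t).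
  assert (HL : forall t, L t = sumR m (fun i => nu i * ell t i)).
  { intros s. unfold L, Lbar, ell. rewrite <- sumR_opp. apply sumR_ext; intros; ring. }
  assert (Hpl : forall s i, (i < m)%nat ->
     ln (1 + exp (- d s i)) <= ell s i /\ ell s i <= Kr * exp (- d s i)).
  { intros s i Hi. apply (point_loss K (X (alpha s) (pt i)) (cls i)); auto. }
  assert (Hell0 : forall s i, (i < m)%nat -> 0 <= ell s i).
  { intros s i Hi. destruct (Hpl s i Hi) as [A _]. eapply Rle_trans; [|apply A].
    rewrite <- ln_1. apply ln_le_mono; [lra|]. pose proof (exp_pos (- d s i)); lra. }
  assert (Hkey : forall s a, 0 <= a ->
     nuset m nu (fun i => negb (Rltb a (d s i))) * (exp (- a) / 2) <= L s).
  { intros s a Ha. rewrite HL. unfold nuset. rewrite Rmult_comm, <- sumR_scal.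
    apply sumR_le. intros i Hi. pose proof (Hnu i Hi). pose proof (Hell0 s i Hi).
    unfold Rltb. destruct (Rlt_dec a (d s i)); simpl.
    - nra.
    - assert (Hea : exp (- a) <= 1) by (rewrite <- exp_0; apply exp_le_mono; lra).
      pose proof (exp_pos (-a)).
      assert (exp (- a) / 2 <= ell s i).
      { eapply Rle_trans; [apply ln_1p_ge_half; lra|]. eapply Rle_trans; [|apply (Hpl s i Hi)].
        apply ln_le_mono; [lra|]. apply Rplus_le_compat_l, exp_le_mono. lra. }
      nra. }
  assert (HL0 : L t0 <= c0).
  { set (b := fun i => Rltb eta (d t0 i)).
    assert (Hub : L t0 <= Kr * exp (- eta) * nuset m nu b + 3 * Kr * nuset m nu (fun i => negb (b i))).
    { rewrite HL. unfold nuset. rewrite <- !sumR_scal, <- sumR_plus. apply sumR_le.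
      intros i Hi. pose proof (Hnu i Hi). destruct (Hpl t0 i Hi) as [_ U].
      unfold b, Rltb. destruct (Rlt_dec eta (d t0 i)); simpl.
      - assert (exp (- d t0 i) <= exp (- eta)) by (apply exp_le_mono; lra).
        assert (ell t0 i <= Kr * exp (- eta)) by nra.
        assert (nu i * ell t0 i <= nu i * (Kr * exp (- eta))) by (apply Rmult_le_compat_l; lra).
        lra.
      - assert (exp (- d t0 i) <= 3).
        { eapply Rle_trans; [|apply exp_le_3]. apply exp_le_mono. pose proof (Hbad i Hi). unfold d. lra. }
        assert (ell t0 i <= Kr * 3) by nra.
        assert (nu i * ell t0 i <= nu i * (Kr * 3)) by (apply Rmult_le_compat_l; lra).
        lra. }
    pose proof (nuset_compl m nu b Hsum).
    pose proof (nuset_nonneg m nu b Hnu). pose proof (nuset_nonneg m nu (fun i => negb (b i)) Hnu).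
    assert (Hb : nuset m nu b > 1 - delta) by exact Hgood.
    assert (He : exp (- eta) <= c0 / (2 * Kr)).
    { replace (c0 / (2*Kr)) with (exp (- ln (2 * Kr / c0))).
      apply exp_le_mono. unfold eta. pose proof (Rmax_r 1 (ln (2 * Kr / c0))). lra.
      rewrite exp_Ropp, exp_ln. field; lra. apply Rdiv_lt_0_compat; lra. }
    pose proof (exp_pos (- eta)).
    assert (Kr * exp (- eta) * nuset m nu b <= c0 / 2).
    { apply Rle_trans with (Kr * exp (-eta) * 1). apply Rmult_le_compat_l; nra.
      apply Rle_trans with (Kr * (c0 / (2*Kr))); [nra|]. right; field; lra. }
    assert (3 * Kr * nuset m nu (fun i => negb (b i)) <= c0 / 2).
    { apply Rle_trans with (3 * Kr * delta). apply Rmult_le_compat_l; lra.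
      unfold delta. right; field; lra. }
    lra. }
  assert (HLt : L t <= c0) by (unfold L in *; eapply Rle_trans; [apply Hmono; exact Ht| exact HL0]).
  split.
  - pose proof (Hkey t 0 (Rle_refl 0)). rewrite Ropp_0, exp_0 in H.
    pose proof (nuset_compl m nu (fun i => Rltb 0 (d t i)) Hsum). unfold d in *. lra.
  - intros etas [He1 He2]. fold (L t0) in He2 |- *.
    destruct (Rle_or_lt (3 * Lam * L t0) 0) as [Hu|Hu].
    { rewrite ln_nonpos in He2 by auto. lra. }
    set (u := 3 * Lam * L t0) in *. set (N := - ln u) in *.
    assert (HeN : exp (- N) = u) by (unfold N; rewrite Ropp_involutive, exp_ln; auto).
    pose proof (Hkey t etas ltac:(lra)) as Hk.
    pose proof (nuset_compl m nu (fun i => Rltb etas (d t i)) Hsum) as Hc.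
    set (bad := nuset m nu (fun i => negb (Rltb etas (d t i)))) in *.
    assert (Hbad2 : bad <= (2/3) * exp (etas - N)).
    { assert (HLtt : L t <= L t0) by (apply Hmono; exact Ht).
      assert (bad * exp (- etas) <= 2 * L t0) by nra.
      unfold Rminus; rewrite exp_plus, HeN. unfold u.
      pose proof (exp_pos etas). pose proof (exp_pos (- etas)).
      assert (exp etas * exp (- etas) = 1) by (rewrite <- exp_plus, Rplus_opp_r, exp_0; auto).
      assert (bad <= 2 * L t0 * exp etas) by nra.
      assert (0 <= L t0) by (rewrite HL; apply sumR_nonneg; intros i Hi; pose proof (Hnu i Hi); pose proof (Hell0 t0 i Hi); nra).
      assert (0 <= L t0 * exp etas) by nra.
      assert (L t0 * exp etas <= Lam * (L t0 * exp etas)) by nra. nra. }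
    assert (Hrp : 0 < Rpower (3/4) (N / (2 * etas))) by (unfold Rpower; apply exp_pos).
    unfold d in *. fold bad.
    destruct (Rle_or_lt N (2 * etas)) as [Hc3|Hc3].
    + assert (exp (etas - N) < 1) by (rewrite <- exp_0; apply exp_increasing; lra).
      assert (Hl34 : ln (3/4) < 0) by (rewrite <- ln_1; apply ln_increasing; lra).
      assert (3/4 <= Rpower (3/4) (N / (2 * etas))).
      { unfold Rpower. rewrite <- (exp_ln (3/4)) at 1 by lra. apply exp_le_mono.
        assert (0 <= N / (2*etas) <= 1).
        { split. apply Rmult_le_pos; [lra| left; apply Rinv_0_lt_compat; lra].
          apply (Rmult_le_reg_r (2*etas)); [lra|]. unfold Rdiv. rewrite Rmult_assoc, Rinv_l by lra. lra. }
        nra. }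
      lra.
    + assert (Hy : exp (etas - N) <= exp (- N / 2)) by (apply exp_le_mono; lra).
      assert (exp (- N / 2) * exp (- N / 2) = u) by (rewrite <- exp_plus, <- HeN; f_equal; field).
      assert (u <= eps * eps) by (unfold u; nra).
      pose proof (exp_pos (- N / 2)).
      assert (exp (- N / 2) <= eps) by nra.
      lra.
Qed.
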